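(* Let $G$ be a non-amenable group with $G=H\times K$ for some groups $H,K$. Then $$\min\{\mathcal{T}(H),\mathcal{T}(K)\}\leq 2(\mathcal{T}(G)-1)^2.$$
   Context: A group $G$ admits a paradoxical decomposition if there exist positive integers $m,n$, pairwise disjoint subsets $P_1,\ldots,P_m,Q_1,\ldots,Q_n$ of $G$ and elements $g_1,\ldots,g_m,h_1,\ldots,h_n\in G$ such that $G=\bigcup_{i=1}^m P_ig_i=\bigcup_{j=1}^n Q_jh_j$; this happens if and only if $G$ is non-amenable. For a non-amenable group $G$, the Tarski number $\mathcal{T}(G)$ is the minimal value of $m+n$ over all paradoxical decompositions of $G$; for an amenable group the Tarski number is taken to be $\infty$. *)

(* Defs.v *)
From Stdlib Require Import Arith Lia ClassicalEpsilon.

Record group : Type := Group {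
  carrier :> Type;
  gmul : carrier -> carrier -> carrier;
  gone : carrier;
  ginv : carrier -> carrier;
  gmulA : forall x y z, gmul x (gmul y z) = gmul (gmul x y) z;
  gmul1 : forall x, gmul gone x = x;
  gmulV : forall x, gmul (ginv x) x = gone
}.

Definition prod_group (H K : group) : group.
Proof.
refine (@Group (carrier H * carrier K)
  (fun a b => (gmul H (fst a) (fst b), gmul K (snd a) (snd b)))
  (gone H, gone K)
  (fun a => (ginv H (fst a), ginv K (snd a))) _ _ _).
- intros [x1 x2] [y1 y2] [z1 z2]; simpl; now rewrite !gmulA.
- intros [x1 x2]; simpl; now rewrite !gmul1.
- intros [x1 x2]; simpl; now rewrite !gmulV.
Defined.

(* Paradoxical decomposition with m pieces P_1..P_m and n pieces Q_1..Q_n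
   (indexed by 0..m-1 and 0..n-1), all pairwise disjoint, and
   G = U_i P_i g_i = U_j Q_j h_j (right translates). *)
Definition paradoxical (G : group) (m n : nat) : Prop :=
  0 < m /\ 0 < n /\
  exists (P Q : nat -> G -> Prop) (g h : nat -> G),
    (forall i j x, i < m -> j < m -> i <> j -> P i x -> P j x -> False) /\
    (forall i j x, i < n -> j < n -> i <> j -> Q i x -> Q j x -> False) /\
    (forall i j x, i < m -> j < n -> P i x -> Q j x -> False) /\
    (forall x : G, exists i y, i < m /\ P i y /\ x = gmul G y (g i)) /\
    (forall x : G, exists j y, j < n /\ Q j y /\ x = gmul G y (h j)).

(* Non-amenability, via Tarski's theorem: existence of a paradoxical decomposition. *)
Definition nonamenable (G : group) : Prop := exists m n, paradoxical G m n.

Definition paradox_size (G : group) (t : nat) : Prop :=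
  exists m n, m + n = t /\ paradoxical G m n.

Definition is_tarski (G : group) (t : nat) : Prop :=
  paradox_size G t /\ forall t', paradox_size G t' -> t <= t'.

(* Tarski number in N u {oo}: None stands for oo (amenable case). *)
Definition tarski (G : group) : option nat :=
  match excluded_middle_informative (exists t, is_tarski G t) with
  | left e => Some (proj1_sig (constructive_indefinite_description _ e))
  | right _ => None
  end.

Definition ole (a b : option nat) : Prop :=
  match a, b with
  | _, None => True
  | None, Some _ => False
  | Some x, Some y => x <= y
  end.

Definition omin (a b : option nat) : option nat :=
  match a, b with
  | None, b => b
  | a, None => a
  | Some x, Some y => Some (Nat.min x y)
  end.

(* Main.v *)
Require Import Defs.
From Stdlib Require Import ClassicalEpsilon Classical FunctionalExtensionality PropExtensionality.
From HB Require Import structures.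
From mathcomp Require Import all_boot.
From mathcomp Require Import boolp.
From mathcomp Require Import finmap zify.
Set Implicit Arguments. Unset Strict Implicit. Unset Printing Implicit Defensive.
Local Open Scope fset_scope.

Lemma card_fsetM (T1 T2 : choiceType) (A : {fset T1}) (B : {fset T2}) :
  #|` A `*` B| = (#|` A| * #|` B|)%N.
Proof.
rewrite card_fset_sum1 /fsetM big_imfset2 /=; last by move=> [??] [??] _ _ /= [-> ->].
rewrite (card_fset_sum1 A) (card_fset_sum1 B) big_distrl /=.
apply: eq_bigr => i _. rewrite mul1n. by [].
Qed.

Section Grp.
Variable G : group.
Definition TT := {classic (carrier G)}.
Definition mul (x y : TT) : TT := gmul G x y.
Definition inv (x : TT) : TT := ginv G x.
Definition one : TT := gone G.

Lemma mulA x y z : mul x (mul y z) = mul (mul x y) z. Proof. exact: gmulA. Qed.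
Lemma mul1 x : mul one x = x. Proof. exact: gmul1. Qed.
Lemma mulV x : mul (inv x) x = one. Proof. exact: gmulV. Qed.
Lemma mulVr x : mul x (inv x) = one.
Proof.
have e : mul (mul (inv (inv x)) (inv x)) (mul x (inv x)) = mul x (inv x) by rewrite mulV mul1.
by rewrite -e -mulA (mulA (inv x) x) mulV mul1 mulV.
Qed.
Lemma mulr1 x : mul x one = x.
Proof. by rewrite -(mulV x) mulA mulVr mul1. Qed.
Lemma mulK x y : mul (mul x y) (inv y) = x.
Proof. by rewrite -mulA mulVr mulr1. Qed.
Lemma mulKV x y : mul (mul x (inv y)) y = x.
Proof. by rewrite -mulA mulV mulr1. Qed.
Lemma mulI x y z : mul x y = mul x z -> y = z.
Proof. by move=> e; rewrite -(mul1 y) -(mul1 z) -(mulV x) -!mulA e. Qed.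
Lemma mulIr x y z : mul y x = mul z x -> y = z.
Proof. by move=> e; rewrite -(mulK y x) -(mulK z x) e. Qed.

Definition pset (B C : {fset TT}) : {fset TT} := [fset mul p.1 p.2 | p in B `*` C].

Lemma psetP B C y : reflect (exists b c, [/\ b \in B, c \in C & y = mul b c]) (y \in pset B C).
Proof.
apply: (iffP idP) => [/imfsetP [[b c] /=]|[b [c [hb hc ->]]]].
  by rewrite in_fsetM /= => /andP[hb hc] ->; exists b, c.
by apply/imfsetP; exists (b, c) => //=; rewrite in_fsetM /= hb hc.
Qed.

Lemma in_pset B C b c : b \in B -> c \in C -> mul b c \in pset B C.
Proof. by move=> hb hc; apply/psetP; exists b, c. Qed.

Lemma card_pset B C : (#|` pset B C| <= #|` B| * #|` C|)%N.
Proof. by rewrite -card_fsetM; apply: leq_imfset_card. Qed.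

Lemma pset_sub B B' C C' : B `<=` B' -> C `<=` C' -> pset B C `<=` pset B' C'.
Proof.
move=> /fsubsetP hB /fsubsetP hC; apply/fsubsetP => y /psetP [b [c [hb hc ->]]].
by apply: in_pset; [apply: hB | apply: hC].
Qed.

Lemma pset_assoc B X Y : pset (pset B X) Y `<=` pset B (pset X Y).
Proof.
apply/fsubsetP => y /psetP [u [c [/psetP [b [x [hb hx ->]]] hc ->]]].
by rewrite -mulA; apply: in_pset => //; apply: in_pset.
Qed.

Definition doubling (D : {fset TT}) := forall B : {fset TT}, (2 * #|` B| <= #|` pset B D|)%N.



Section Hall.
Variable D : {fset TT}.
Hypothesis hd : doubling D.

Definition V := (TT * bool)%type.
Definition Nb (v : V) : {fset TT} := [fset mul v.1 d | d in D].
Definition NF (F : {fset V}) : {fset TT} := [fset mul p.1.1 p.2 | p in F `*` D].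

Lemma NbP v y : reflect (exists2 d, d \in D & y = mul v.1 d) (y \in Nb v).
Proof. exact: imfsetP. Qed.

Lemma NFP F y : reflect (exists2 v, v \in F & y \in Nb v) (y \in NF F).
Proof.
apply: (iffP idP) => [/imfsetP [[v d] /=]|[v hv /NbP [d hd' ->]]].
  by rewrite in_fsetM /= => /andP[hv hd'] ->; exists v => //; apply/NbP; exists d.
by apply/imfsetP; exists (v, d) => //=; rewrite in_fsetM /= hv hd'.
Qed.

Lemma NF_sub F1 F2 : F1 `<=` F2 -> NF F1 `<=` NF F2.
Proof.
move=> /fsubsetP h; apply/fsubsetP => y /NFP [v hv hy]; apply/NFP; exists v => //.
exact: h.
Qed.

Lemma NF_U F1 F2 : NF (F1 `|` F2) = NF F1 `|` NF F2.
Proof.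
apply/fsetP => y; apply/idP/idP.
  move=> /NFP [v hv hy]; rewrite in_fsetU; apply/orP; move: hv; rewrite in_fsetU => /orP [hv|hv].
    by left; apply/NFP; exists v.
  by right; apply/NFP; exists v.
rewrite in_fsetU => /orP [/NFP [v hv hy]|/NFP [v hv hy]]; apply/NFP; exists v => //; rewrite in_fsetU hv ?orbT //.
Qed.

Lemma NF_U1 v F : NF (v |` F) = Nb v `|` NF F.
Proof.
apply/fsetP => y; apply/idP/idP.
  move=> /NFP [w hw hy]; move: hw; rewrite in_fset1U => /orP [/eqP hw|hw]; rewrite in_fsetU.
    by rewrite -hw hy.
  by apply/orP; right; apply/NFP; exists w.
rewrite in_fsetU => /orP[hy|/NFP [w hw hy]]; apply/NFP.
  by exists v => //; rewrite in_fset1U eqxx.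
by exists w => //; rewrite in_fset1U hw orbT.
Qed.

Lemma NF0 : NF fset0 = fset0.
Proof. by apply/fsetP => y; rewrite inE; apply/negP => /NFP [v]; rewrite inE. Qed.

Definition Hall (Dm : {fset V}) (U : {fset TT}) :=
  forall F : {fset V}, [disjoint F & Dm] -> (#|` F| <= #|` NF F `\` U|)%N.

Lemma Hall0 : Hall fset0 fset0.
Proof.
move=> F _; rewrite fsetD0.
set P := [fset v.1 | v in F].
have h1 : F `<=` P `*` [fset true; false].
  apply/fsubsetP => [[x b] hv]; rewrite in_fsetM /=; apply/andP; split.
    by apply/imfsetP; exists (x, b).
  by case: b {hv}; rewrite !inE.
have h2 : pset P D `<=` NF F.
  apply/fsubsetP => y /psetP [x [d [/imfsetP [v /= hv ->] hd' ->]]].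
  by apply/NFP; exists v => //; apply/NbP; exists d.
apply: leq_trans (fsubset_leq_card h1) _.
rewrite card_fsetM cardfs2 /= mulnC.
apply: leq_trans (hd P) _; exact: fsubset_leq_card.
Qed.

Section Ext.
Variables (Dm : {fset V}) (U : {fset TT}).
Hypothesis hH : Hall Dm U.
Let g F := #|` NF F `\` U|.

Lemma submod F1 F2 : (g (F1 `|` F2) + g (F1 `&` F2) <= g F1 + g F2)%N.
Proof.
rewrite /g NF_U fsetDUl -(cardfsUI (NF F1 `\` U) (NF F2 `\` U)) leq_add2l.
apply: fsubset_leq_card; apply/fsubsetP => y; rewrite !inE.
move=> /andP [hu /NFP [v]]; rewrite in_fsetI => /andP [h1 h2] hy.
by rewrite hu /=; apply/andP; split; apply/NFP; exists v.
Qed.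

Lemma Hall_ext v : v \notin Dm ->
  exists y, [/\ y \in Nb v, y \notin U & Hall (v |` Dm) (y |` U)].
Proof.
move=> hv.
apply: NNPP => hno.
have hbad : forall y, y \in Nb v -> y \notin U ->
   exists F : {fset V}, [disjoint F & v |` Dm] /\ (#|` NF F `\` (y |` U)| < #|` F|)%N.
  move=> y h1 h2; apply: NNPP => hF; apply: hno; exists y; split => // F hdis.
  rewrite leqNgt; apply/negP => hlt; apply: hF; by exists F.
have dis_sub : forall F, [disjoint F & v |` Dm] -> [disjoint F & Dm].
  move=> F; apply: fdisjointWr; exact: fsubsetU1.
have main : forall s : seq TT, {subset s <= Nb v `\` U} ->
   exists F : {fset V}, [/\ [disjoint F & v |` Dm], g F = #|` F| & {subset s <= NF F}].
  elim => [|y s IH] hs.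
    by exists fset0; rewrite /g fdisjoint0X NF0 fset0D cardfs0; split.
  have [F [disF gF sF]] : exists F : {fset V}, [/\ [disjoint F & v |` Dm], g F = #|` F| & {subset s <= NF F}].
    by apply: IH => x hx; apply: hs; rewrite inE hx orbT.
  have /hs : y \in y :: s by rewrite mem_head.
  rewrite in_fsetD => /andP [hy2 hy1].
  have [Fy [disFy hlt]] := hbad y hy1 hy2.
  have HFy := hH (dis_sub _ disFy).
  have yin : y \in NF Fy.
    apply/negPn/negP => hn.
    have : NF Fy `\` U `<=` NF Fy `\` (y |` U).
      apply/fsubsetP => x; rewrite !inE => /andP [h1 h2].
      rewrite h2 andbT negb_or h1 andbT; apply/eqP => e.
      by move: hn; rewrite -e h2.
    move/fsubset_leq_card => hc.
    have := leq_trans HFy hc; by rewrite leqNgt hlt.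
  have gFy : g Fy = #|` Fy|.
    apply/eqP; rewrite eqn_leq HFy andbT.
    have : NF Fy `\` U `<=` [fset y] `|` (NF Fy `\` (y |` U)).
      apply/fsubsetP => x; rewrite !inE => /andP [h1 h2].
      by rewrite h2 andbT negb_or h1 andbT; case: (x == y).
    move/fsubset_leq_card => hc; apply: leq_trans hc _.
    apply: leq_trans (leq_card_fsetU _ _).1 _. by rewrite cardfs1 add1n.
  exists (F `|` Fy); split.
  - by rewrite fdisjointUX disF disFy.
  - have hs1 := submod F Fy.
    have hI : (#|` F `&` Fy| <= g (F `&` Fy))%N.
      by apply: hH; apply: fdisjointWl (fsubsetIl F Fy) (dis_sub _ disF).
    have hU : (#|` F `|` Fy| <= g (F `|` Fy))%N.
      by apply: hH; rewrite fdisjointUX (dis_sub _ disF) (dis_sub _ disFy).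
    have hc := cardfsUI F Fy.
    rewrite gF gFy in hs1. lia.
  - move=> x; rewrite inE => /orP [/eqP ->|hx].
      by move: yin; apply: fsubsetP; apply: NF_sub; apply: fsubsetUr.
    by move: (sF x hx); apply: fsubsetP; apply: NF_sub; apply: fsubsetUl.
have [F [disF gF sF]] := main (Nb v `\` U) (fun x h => h).
have disF' : [disjoint v |` F & Dm] by rewrite fdisjointU1X hv (dis_sub _ disF).
have hF' := hH disF'.
have vF : v \notin F by move/fdisjointP: disF => h; apply/negP => /h; rewrite in_fset1U eqxx.
rewrite cardfsU1 vF NF_U1 in hF'.
have : (Nb v `|` NF F) `\` U `<=` NF F `\` U.
  rewrite fsetDUl; apply/fsubsetP => x; rewrite in_fsetU => /orP [hx|//].
  by rewrite in_fsetD (sF x hx); move: hx; rewrite in_fsetD => /andP [->].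
move/fsubset_leq_card => hc.
have := leq_trans hF' hc; rewrite -/(g F) gF. lia.
Qed.
End Ext.


Lemma uniq_map_eq (A B : eqType) (f : A -> B) (s : seq A) a b :
  uniq (map f s) -> a \in s -> b \in s -> f a = f b -> a = b.
Proof.
elim: s => [//|x s IH] /= /andP [hx hu].
rewrite !inE => /orP [/eqP ->|ha] /orP [/eqP ->|hb] // e.
- by move: hx; rewrite e (map_f f hb).
- by move: hx; rewrite -e (map_f f ha).
- exact: IH.
Qed.

Definition domS (s : seq (V * TT)) : {fset V} := [fset x in map fst s].
Definition ranS (s : seq (V * TT)) : {fset TT} := [fset x in map snd s].
Definition Inv s := [/\ Hall (domS s) (ranS s), (forall p, p \in s -> p.2 \in Nb p.1),
   uniq (map fst s) & uniq (map snd s)].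

Lemma Inv_nil : Inv [::].
Proof.
split => //; have -> : domS [::] = fset0 by apply/fsetP => x; rewrite !inE.
have -> : ranS [::] = fset0 by apply/fsetP => x; rewrite !inE.
exact: Hall0.
Qed.

Lemma Inv_cons s v : Inv s -> v \notin map fst s -> exists y, Inv ((v, y) :: s).
Proof.
move=> [hH hN hu1 hu2] hv.
have hv' : v \notin domS s by rewrite inE.
have [y [hy1 hy2 hy3]] := Hall_ext hH hv'.
exists y; split => /=.
- have -> : domS ((v, y) :: s) = v |` domS s by apply/fsetP => x; rewrite !inE.
  by have -> : ranS ((v, y) :: s) = y |` ranS s by apply/fsetP => x; rewrite !inE.
- by move=> p; rewrite inE => /orP [/eqP -> //|]; apply: hN.
- by rewrite hv hu1.
- by move: hy2; rewrite inE => ->.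
Qed.

Lemma Inv_ext s (W : seq V) : Inv s ->
  exists pre, Inv (pre ++ s) /\ {subset W <= map fst (pre ++ s)}.
Proof.
elim: W s => [|w W IH] s hs; first by exists [::].
have [pre1 [h1 h2]] : exists pre1, Inv (pre1 ++ s) /\ w \in map fst (pre1 ++ s).
  case: (boolP (w \in map fst s)) => hw; first by exists [::].
  have [y hy] := Inv_cons hs hw.
  by exists [:: (w, y)]; split => //=; rewrite inE eqxx.
have [pre2 [h3 h4]] := IH _ h1.
exists (pre2 ++ pre1); rewrite -catA; split => // x; rewrite inE => /orP [/eqP ->|hx].
  by rewrite map_cat mem_cat h2 orbT.
exact: h4.
Qed.

Lemma ext_ex s (W : seq V) : exists pre,
  Inv s -> Inv (pre ++ s) /\ {subset W <= map fst (pre ++ s)}.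
Proof.
case: (boolP `[< Inv s >]) => [/asboolP hs|/asboolP hs].
  by have [pre hp] := Inv_ext W hs; exists pre.
by exists [::].
Qed.

Definition ext s W := projT1 (cid (ext_ex s W)).
Lemma extP s W : Inv s -> Inv (ext s W ++ s) /\ {subset W <= map fst (ext s W ++ s)}.
Proof. exact: (projT2 (cid (ext_ex s W))). Qed.




Definition Dinv : {fset TT} := [fset inv d | d in D].

Fixpoint Lv (c : TT) (r : nat) : {fset TT} :=
  match r with
  | 0 => [fset c]
  | r.+1 => Lv c r `|` pset (Lv c r) D `|` pset (Lv c r) Dinv
  end.

Lemma Lv_mono c r : Lv c r `<=` Lv c r.+1.
Proof. by rewrite /= -fsetUA fsubsetUl. Qed.

Lemma Lv_mono' c r k : Lv c r `<=` Lv c (r + k).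
Proof.
elim: k => [|k IH]; first by rewrite addn0.
by rewrite addnS; apply: fsubset_trans IH (Lv_mono _ _).
Qed.

Lemma Lv_stepD c r u d : u \in Lv c r -> d \in D -> mul u d \in Lv c r.+1.
Proof. by move=> hu hd'; rewrite /= !in_fsetU (in_pset hu hd') orbT. Qed.

Lemma Lv_stepI c r u d : u \in Lv c r -> d \in D -> mul u (inv d) \in Lv c r.+1.
Proof.
move=> hu hd'; have hi : inv d \in Dinv by apply/imfsetP; exists d.
by rewrite /= !in_fsetU (in_pset hu hi) ?orbT.
Qed.

Lemma Lv_cases c r x : x \in Lv c r.+1 ->
  [\/ x \in Lv c r, exists2 u, u \in Lv c r & exists2 d, d \in D & x = mul u d
    | exists2 u, u \in Lv c r & exists2 d, d \in D & x = mul u (inv d)].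
Proof.
rewrite /= !in_fsetU => /orP [/orP [h|/psetP [u [d [hu hd' ->]]]]|/psetP [u [e [hu he ->]]]].
- by constructor 1.
- by constructor 2; exists u => //; exists d.
- move: he => /imfsetP [d hd' ->]; by constructor 3; exists u => //; exists d.
Qed.

Lemma Lv_trans a b r1 r2 x : b \in Lv a r1 -> x \in Lv b r2 -> x \in Lv a (r1 + r2).
Proof.
move=> hb; elim: r2 x => [|r2 IH] x.
  by rewrite /= inE => /eqP ->; rewrite addn0.
rewrite addnS => /Lv_cases [h|[u hu [d hd' ->]]|[u hu [d hd' ->]]].
- by apply: (fsubsetP (Lv_mono _ _)); apply: IH.
- by apply: Lv_stepD => //; apply: IH.
- by apply: Lv_stepI => //; apply: IH.
Qed.

Definition reach (a x : TT) := exists r, x \in Lv a r.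

Lemma reach_refl a : reach a a.
Proof. by exists 0; rewrite /= inE. Qed.

Lemma reach_trans a b x : reach a b -> reach b x -> reach a x.
Proof. by move=> [r1 h1] [r2 h2]; exists (r1 + r2)%N; apply: Lv_trans h1 h2. Qed.

Lemma reach_sym a b : reach a b -> reach b a.
Proof.
move=> [r]; elim: r b => [|r IH] b.
  by rewrite /= inE => /eqP ->; apply: reach_refl.
move=> /Lv_cases [h|[u hu [d hd' ->]]|[u hu [d hd' ->]]].
- exact: IH.
- apply: reach_trans _ (IH _ hu); exists 1.
  by rewrite -[X in X \in _](mulK u d); apply: Lv_stepI => //; rewrite /= inE.
- apply: reach_trans _ (IH _ hu); exists 1.
  by rewrite -[X in X \in _](mulKV u d); apply: Lv_stepD => //; rewrite /= inE.
Qed.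

Lemma Nb_reach v y : y \in Nb v -> reach v.1 y.
Proof. by move=> /NbP [d hd' ->]; exists 1; apply: Lv_stepD => //; rewrite /= inE. Qed.

Definition VL (c : TT) (r : nat) : {fset V} := Lv c r `*` [fset true; false].

Fixpoint st (c : TT) (r : nat) : seq (V * TT) :=
  match r with
  | 0 => [::]
  | r.+1 => ext (st c r) (VL c r) ++ st c r
  end.

Lemma st_Inv c r : Inv (st c r).
Proof. by elim: r => [|r IH] /=; [exact: Inv_nil | case: (extP (VL c r) IH)]. Qed.

Lemma st_suffix c r k : exists pre, st c (r + k) = pre ++ st c r.
Proof.
elim: k => [|k [pre IH]]; first by exists [::]; rewrite addn0.
by rewrite addnS /= IH; exists (ext (st c (r + k)) (VL c (r + k)) ++ pre); rewrite IH catA.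
Qed.

Lemma st_cover c r x b : x \in Lv c r -> (x, b) \in map fst (st c r.+1).
Proof.
move=> hx; have [_ h] := extP (VL c r) (st_Inv c r); apply: h.
by rewrite in_fsetM /= hx; case: b; rewrite !inE.
Qed.

Lemma st_common c r1 r2 : exists r, exists pre1 pre2, st c r = pre1 ++ st c r1 /\ st c r = pre2 ++ st c r2.
Proof.
case: (leqP r1 r2) => h.
  have [pre e] := st_suffix c r1 (r2 - r1).
  have e2 : (r1 + (r2 - r1))%N = r2 by apply: subnKC.
  rewrite e2 in e.
  exists r2, pre, [::]; split; [exact: e | reflexivity].
have [pre e] := st_suffix c r2 (r1 - r2).
have e2 : (r2 + (r1 - r2))%N = r1 by apply: subnKC; apply: ltnW.
rewrite e2 in e.
exists r1, [::], pre; split; [reflexivity | exact: e].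
Qed.

Definition rep (a : TT) : TT := epsilon (inhabits one) (reach a).

Lemma rep_reach a : reach a (rep a).
Proof. by apply: (epsilon_spec (inhabits one) (reach a)); exists a; apply: reach_refl. Qed.

Lemma rep_eq a b : reach a b -> rep a = rep b.
Proof.
move=> hab; rewrite /rep; congr epsilon.
apply: functional_extensionality => x; apply: propositional_extensionality; split.
  by move=> h; apply: reach_trans (reach_sym hab) h.
by move=> h; apply: reach_trans hab h.
Qed.

Definition psic (c : TT) (v : V) : TT :=
  epsilon (inhabits one) (fun y => exists r, (v, y) \in st c r).

Definition psi (v : V) : TT := psic (rep v.1) v.

Lemma psi_in v : exists r, (v, psi v) \in st (rep v.1) r.
Proof.
rewrite /psi /psic; apply: (epsilon_spec (inhabits one) (fun y => exists r, (v, y) \in st (rep v.1) r)).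
have [r hr] := reach_sym (rep_reach v.1).
have /mapP [[w y] hy /= e] := st_cover v.2 hr.
exists y, r.+1; move: hy; rewrite -e; by case: v {hr e}.
Qed.

Lemma psi_Nb v : psi v \in Nb v.
Proof.
have [r hr] := psi_in v; have [_ h _ _] := st_Inv (rep v.1) r; exact: (h _ hr).
Qed.

Lemma psi_inj v w : psi v = psi w -> v = w.
Proof.
move=> e.
have hc : rep v.1 = rep w.1.
  apply: rep_eq; apply: reach_trans (Nb_reach (psi_Nb v)) _.
  by rewrite e; apply: reach_sym; apply: Nb_reach; apply: psi_Nb.
have [r1 h1] := psi_in v; have [r2 h2] := psi_in w.
rewrite hc in h1.
have [r [pre1 [pre2 [e1 e2]]]] := st_common (rep w.1) r1 r2.
have [_ _ _ hu] := st_Inv (rep w.1) r.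
have := @uniq_map_eq _ _ snd _ (v, psi v) (w, psi w) hu.
rewrite e1 mem_cat h1 orbT -e1 e2 mem_cat h2 orbT => /(_ isT isT e).
by case.
Qed.

End Hall.


Lemma doubling_parad D : doubling D -> paradoxical G #|` D| #|` D|.
Proof.
move=> hd.
set Dl := enum_fset D.
have m0 : (0 < size Dl)%N.
  have := hd [fset one]; rewrite cardfs1 muln1 => h.
  have := leq_trans h (card_pset _ _); rewrite cardfs1 mul1n.
  by case: (size Dl).
have ltm : forall i, (i < size Dl)%coq_nat -> (i < size Dl)%N by move=> i /ltP.
pose ps := psi D.
have psi_inj' : forall x x' b b', ps (x, b) = ps (x', b') -> x = x' /\ b = b'.
  by move=> x x' b b' /(psi_inj hd) [-> ->].
split; first by apply/ltP.
split; first by apply/ltP.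
exists (fun i y => exists x : TT, ps (x, true) = y /\ y = mul x (nth one Dl i)).
exists (fun i y => exists x : TT, ps (x, false) = y /\ y = mul x (nth one Dl i)).
exists (fun i => inv (nth one Dl i)), (fun i => inv (nth one Dl i)).
have nth_inj : forall i j, (i < size Dl)%coq_nat -> (j < size Dl)%coq_nat ->
   nth one Dl i = nth one Dl j -> i = j.
  move=> i j /ltP hi /ltP hj e; apply/eqP; rewrite -(nth_uniq one hi hj) ?e //.
  exact: fset_uniq.
have cover : forall b (x : TT), exists i y, (i < size Dl)%coq_nat /\
    (exists x0 : TT, ps (x0, b) = y /\ y = mul x0 (nth one Dl i)) /\ x = gmul G y (inv (nth one Dl i)).
  move=> b x; have /NbP [d hdD e] := psi_Nb hd (x, b).
  exists (index d Dl), (ps (x, b)); split; first by apply/ltP; rewrite index_mem.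
  rewrite nth_index //; split; first by exists x; split.
  by rewrite /ps e /= -/(mul _ _) mulK.
split.
  move=> i j y hi hj nij [x [e1 e2]] [x' [e3 e4]].
  have [ex _] := psi_inj' _ _ _ _ (etrans e1 (esym e3)).
  by apply: nij; apply: nth_inj => //; apply: (mulI (x := x)); rewrite -e2 e4 ex.
split.
  move=> i j y hi hj nij [x [e1 e2]] [x' [e3 e4]].
  have [ex _] := psi_inj' _ _ _ _ (etrans e1 (esym e3)).
  by apply: nij; apply: nth_inj => //; apply: (mulI (x := x)); rewrite -e2 e4 ex.
split.
  move=> i j y hi hj [x [e1 e2]] [x' [e3 e4]].
  by have [_ ] := psi_inj' _ _ _ _ (etrans e1 (esym e3)).
split; [exact: cover true | exact: cover false].
Qed.

End Grp.

Section PartI.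
Variable G : group.

Lemma parad_doubling m n : paradoxical G m n ->
  exists S : {fset TT G}, (#|` S| <= m + n - 1)%N /\ doubling S.
Proof.
move=> [hm [hn [P [Q [g [h [dP [dQ [dPQ [cP cQ]]]]]]]]]].
set a0 := g 0; set b0 := h 0.
set s := [seq mul a0 (inv (g i)) | i <- iota 0 m] ++ [seq mul b0 (inv (h j)) | j <- iota 1 n.-1].
exists [fset x in s]; split.
  rewrite card_fseq; apply: leq_trans (size_undup _) _.
  rewrite size_cat !size_map !size_iota; move/ltP: hm; move/ltP: hn => hn' hm'. lia.
move=> B.
have cP' : forall x : TT G, {i : nat | exists y, (i < m)%coq_nat /\ P i y /\ mul x a0 = gmul G y (g i)}.
  move=> x; apply: cid; have [i [y [h1 [h2 h3]]]] := cP (mul x a0); by exists i, y.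
have cQ' : forall x : TT G, {j : nat | exists y, (j < n)%coq_nat /\ Q j y /\ mul x b0 = gmul G y (h j)}.
  move=> x; apply: cid; have [i [y [h1 [h2 h3]]]] := cQ (mul x b0); by exists i, y.
pose f1 x := mul (mul x a0) (inv (g (proj1_sig (cP' x)))).
pose f2 x := mul (mul x b0) (inv (h (proj1_sig (cQ' x)))).
have hf1 : forall x, (proj1_sig (cP' x) < m)%coq_nat /\ P (proj1_sig (cP' x)) (f1 x).
  move=> x; rewrite /f1; case: (cP' x) => i /= [y [h1 [h2 h3]]]; split => //.
  by rewrite h3 -/(mul y _) mulK.
have hf2 : forall x, (proj1_sig (cQ' x) < n)%coq_nat /\ Q (proj1_sig (cQ' x)) (f2 x).
  move=> x; rewrite /f2; case: (cQ' x) => i /= [y [h1 [h2 h3]]]; split => //.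
  by rewrite h3 -/(mul y _) mulK.
have inj1 : {in B &, injective f1}.
  move=> x x' _ _ e.
  have [i1 p1] := hf1 x; have [i2 p2] := hf1 x'.
  have ei : proj1_sig (cP' x) = proj1_sig (cP' x').
    apply: NNPP => ne; apply: (dP _ _ _ i1 i2 ne p1); by rewrite e.
  move: e; rewrite /f1 ei => /mulIr /mulIr; done.
have inj2 : {in B &, injective f2}.
  move=> x x' _ _ e.
  have [i1 p1] := hf2 x; have [i2 p2] := hf2 x'.
  have ei : proj1_sig (cQ' x) = proj1_sig (cQ' x').
    apply: NNPP => ne; apply: (dQ _ _ _ i1 i2 ne p1); by rewrite e.
  move: e; rewrite /f2 ei => /mulIr /mulIr; done.
have c1 : #|` f1 @` B| = #|` B| by apply: card_in_imfset.
have c2 : #|` f2 @` B| = #|` B| by apply: card_in_imfset.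
have dis : [disjoint f1 @` B & f2 @` B].
  apply/fdisjointP => y /imfsetP [x _ ->]; apply/negP => /imfsetP [x' _ e].
  have [i1 p1] := hf1 x; have [i2 p2] := hf2 x'.
  by apply: (dPQ _ _ _ i1 i2 p1); rewrite e.
have sub : f1 @` B `|` f2 @` B `<=` pset B [fset x in s].
  apply/fsubsetP => y; rewrite in_fsetU => /orP [] /imfsetP [x hx ->].
    rewrite /f1 -mulA; apply: in_pset => //; rewrite in_fset /= /s mem_cat; apply/orP; left.
    apply/mapP; exists (proj1_sig (cP' x)) => //; rewrite mem_iota add0n; apply/andP; split => //.
    by apply/ltP; case: (hf1 x).
  rewrite /f2 -mulA; apply: in_pset => //; rewrite in_fset /= /s mem_cat; apply/orP.
  have [j1 _] := hf2 x.
  case e : (proj1_sig (cQ' x)) => [|j].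
    left; apply/mapP; exists 0; first by rewrite mem_iota add0n; apply/ltP.
    by rewrite /a0 /b0 !mulVr.
  right; apply/mapP; exists j.+1 => //; rewrite mem_iota; rewrite e in j1; move/ltP: j1 => j1.
  apply/andP; split => //; lia.
have hc := fsubset_leq_card sub.
have hU := cardfsUI (f1 @` B) (f2 @` B).
have h0 : #|` f1 @` B `&` f2 @` B| = 0 by move: dis; rewrite -fsetI_eq0 => /eqP ->; rewrite cardfs0.
lia.
Qed.
End PartI.

Lemma arith b0 b1 b2 c0 c1 c2 : (0<b0 -> 0<c0 -> 2*b0*c0 <= b1*c1 -> 2*b0*c1 <= b1*c2 ->
  2*b1*c0 <= b2*c1 -> 2*b1*c1 <= b2*c2 -> b2 < 2*b0 -> c2 < 2*c0 -> False)%N.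
Proof.
move=> *.
have HB : (b1*b1 < 2*b0*b0 \/ b2*b2 < 2*b1*b1)%N by nia.
have HC : (c1*c1 < 2*c0*c0 \/ c2*c2 < 2*c1*c1)%N by nia.
case: HB; case: HC; nia.
Qed.

Section PartII.
Variables H K : group.
Definition pairG (p : TT H * TT K) : TT (prod_group H K) := p.
Definition fstG (p : TT (prod_group H K)) : TT H := (p : carrier H * carrier K).1.
Definition sndG (p : TT (prod_group H K)) : TT K := (p : carrier H * carrier K).2.

Lemma mul_pairG b c s : mul (pairG (b, c)) s = pairG (mul b (fstG s), mul c (sndG s)).
Proof. by []. Qed.

Lemma prod_ineq (S : {fset TT (prod_group H K)}) : doubling S ->
  forall (B : {fset TT H}) (C : {fset TT K}),
  (2 * (#|` B| * #|` C|) <= #|` pset B (fstG @` S)| * #|` pset C (sndG @` S)|)%N.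
Proof.
move=> hS B C.
have inj : injective pairG by move=> p q.
have cA : #|` pairG @` (B `*` C)| = (#|` B| * #|` C|)%N.
  by rewrite card_imfset // card_fsetM.
have sub : pset (pairG @` (B `*` C)) S `<=` pairG @` (pset B (fstG @` S) `*` pset C (sndG @` S)).
  apply/fsubsetP => y /psetP [a [s [/imfsetP [[b c] hbc ->] hs ->]]].
  rewrite mul_pairG; apply/imfsetP; exists (mul b (fstG s), mul c (sndG s)) => //.
  move: hbc; rewrite !in_fsetM /= => /andP [hb hc].
  by rewrite !in_pset //; apply/imfsetP; exists s.
have := hS (pairG @` (B `*` C)); rewrite cA => h.
apply: leq_trans h _; apply: leq_trans (fsubset_leq_card sub) _.
by rewrite card_imfset // card_fsetM.
Qed.
End PartII.

Lemma prod_split (H K : group) (X : {fset TT H}) (Y : {fset TT K}) :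
  (forall (B : {fset TT H}) (C : {fset TT K}),
    2 * (#|` B| * #|` C|) <= #|` pset B X| * #|` pset C Y|)%N ->
  doubling (pset X X) \/ doubling (pset Y Y).
Proof.
move=> hp; apply: NNPP => hn.
have [hx hy] : ~ doubling (pset X X) /\ ~ doubling (pset Y Y) by split => h; apply: hn; [left|right].
have [B hB] := not_all_ex_not _ _ hx; have [C hC] := not_all_ex_not _ _ hy.
move/negP: hB; rewrite -ltnNge => hB.
move/negP: hC; rewrite -ltnNge => hC.
have hB2 := leq_ltn_trans (fsubset_leq_card (pset_assoc B X X)) hB.
have hC2 := leq_ltn_trans (fsubset_leq_card (pset_assoc C Y Y)) hC.
have b0 : (0 < #|` B|)%N by move: hB; case: #|` B|.
have c0 : (0 < #|` C|)%N by move: hC; case: #|` C|.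
have h1 := hp B C; have h2 := hp B (pset C Y); have h3 := hp (pset B X) C.
have h4 := hp (pset B X) (pset C Y).
apply: (arith b0 c0 _ _ _ _ hB2 hC2); rewrite -mulnA //.
Qed.

Lemma tarski_some (G : group) t : tarski G = Some t -> paradox_size G t.
Proof.
rewrite /tarski; case: (excluded_middle_informative _) => // e [<-].
by case: (ClassicalEpsilon.constructive_indefinite_description _ e) => s [].
Qed.

Lemma parad_tarski (G : group) m n : paradoxical G m n ->
  exists t', tarski G = Some t' /\ (t' <= m + n)%N.
Proof.
move=> hp.
have hs : paradox_size G (m + n) by exists m, n.
have ex : exists k, `[< paradox_size G k >] by exists (m + n)%N; apply/asboolP.
case: (ex_minnP ex) => u /asboolP hu hmin.
have ht : exists t, is_tarski G t.
  by exists u; split => // t' h; apply/leP; apply: hmin; apply/asboolP.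
rewrite /tarski; case: (excluded_middle_informative _) => // e.
case: (ClassicalEpsilon.constructive_indefinite_description _ e) => s [hs1 hs2] /=.
exists s; split => //; apply/leP; exact: hs2.
Qed.

Lemma final_H (G : group) (X : {fset TT G}) (k : nat) :
  doubling (pset X X) -> (#|` X| <= k)%N ->
  exists a, tarski G = Some a /\ (a <= 2 * (k * k))%N.
Proof.
move=> hd hX.
have [a [ha hle]] := parad_tarski (doubling_parad hd).
exists a; split => //; apply: leq_trans hle _.
have := card_pset X X; have := leq_mul hX hX. lia.
Qed.

Theorem theorem1 (H K : group) :
  nonamenable (prod_group H K) ->
  forall t : nat, tarski (prod_group H K) = Some t ->
  ole (omin (tarski H) (tarski K)) (Some (Nat.mul 2 (Nat.pow (Nat.sub t 1) 2))).
Proof.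
move=> _ t ht.
have [m [n [hmn hp]]] := tarski_some ht.
have [S [hS hd]] := parad_doubling hp.
have hS' : (#|` S| <= t - 1)%N by rewrite -hmn; exact: hS.
have hX : (#|` (@fstG H K) @` S| <= t - 1)%N.
  by apply: leq_trans hS'; apply: leq_imfset_card.
have hY : (#|` (@sndG H K) @` S| <= t - 1)%N.
  by apply: leq_trans hS'; apply: leq_imfset_card.
have e : Nat.mul 2 (Nat.pow (Nat.sub t 1) 2) = (2 * ((t - 1) * (t - 1)))%N.
  rewrite /= -multE -minusE. lia.
rewrite e.
case: (prod_split (prod_ineq hd)) => [hdX|hdY].
  have [a [ha hle]] := final_H hdX hX.
  rewrite ha; case: (tarski K) => [b|] /=; lia.
have [a [ha hle]] := final_H hdY hY.
rewrite ha; case: (tarski H) => [b|] /=; lia.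
Qed.
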